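(* Let $V$ be a $5$-dimensional complex vector space, $G=G(2,V)\subset P(\Lambda^2V)$ Plücker-embedded, $H_1,H_2\subset\Lambda^2V$ hyperplanes, $V_8=H_1\cap H_2$, with $G_4=G\cap P(V_8)$ smooth, and let $\Omega\subset P(V_8)$ be a quadric such that the threefold $X=G_4\cap\Omega$ is smooth everywhere except at one point $t$, which is an ordinary double point. Then there exists a quadric cone $\Omega'\subset P(V_8)$ with vertex $t$ such that $X=G_4\cap\Omega'$. *)

(* Defs.v *)
From HB Require Import structures.
From mathcomp Require Import all_boot all_order all_algebra.
From mathcomp Require Import complex reals.

Set Implicit Arguments.
Unset Strict Implicit.
Unset Printing Implicit Defensive.

Import Order.TTheory GRing.Theory Num.Theory.
Local Open Scope ring_scope.

Section Plucker.
Variable C : fieldType.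

(* Lambda^2 V, V = C^5, has coordinates p_ij (i<j) indexed by 'I_10 via
   pos i j = i*(9-i)/2 + (j-i-1):
   (0,1)(0,2)(0,3)(0,4)(1,2)(1,3)(1,4)(2,3)(2,4)(3,4) -> 0..9 . *)
Definition pos (i j : nat) : 'I_10 := inord ((i * (9 - i))./2 + (j - i - 1)).

Definition qf (M : 'M[C]_10) (x : 'rV[C]_10) : C := (x *m M *m x^T) 0 0.
Definition lf (h : 'cV[C]_10) (x : 'rV[C]_10) : C := (x *m h) 0 0.

Definition dqf (M : 'M[C]_10) (x : 'rV[C]_10) : 'cV[C]_10 := (M + M^T) *m x^T.

Definition plmx (i j k l : nat) : 'M[C]_10 :=
  delta_mx (pos i j) (pos k l) - delta_mx (pos i k) (pos j l)
  + delta_mx (pos i l) (pos j k).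

(* The five Plücker relations, indexed by the omitted index m of {0,..,4};
   they generate the ideal of G(2,V) in P(Lambda^2 V). *)
Definition plucker (m : 'I_5) : 'M[C]_10 :=
  match val m with
  | 0 => plmx 1 2 3 4
  | 1 => plmx 0 2 3 4
  | 2 => plmx 0 1 3 4
  | 3 => plmx 0 1 2 4
  | _ => plmx 0 1 2 3
  end.

Definition onG (x : 'rV[C]_10) : Prop := forall m, qf (plucker m) x = 0.

Definition inV8 (h1 h2 : 'cV[C]_10) (x : 'rV[C]_10) : Prop :=
  lf h1 x = 0 /\ lf h2 x = 0.

Definition jacG4 (h1 h2 : 'cV[C]_10) (x : 'rV[C]_10) : 'M[C]_(10, 7) :=
  row_mx (\matrix_(a < 10, m < 5) dqf (plucker m) x a 0) (row_mx h1 h2).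

Definition jacX (h1 h2 : 'cV[C]_10) (Q : 'M[C]_10) (x : 'rV[C]_10)
  : 'M[C]_(10, 8) := row_mx (jacG4 h1 h2 x) (dqf Q x).

(* G_4 is smooth (of dimension 4): at each of its points the Zariski tangent
   space of the affine cone has dimension 5, i.e. the Jacobian has rank 5. *)
Definition G4_smooth (h1 h2 : 'cV[C]_10) : Prop :=
  forall x, x != 0 -> onG x -> inV8 h1 h2 x -> \rank (jacG4 h1 h2 x) = 5%N.

Definition onX (h1 h2 : 'cV[C]_10) (Q : 'M[C]_10) (x : 'rV[C]_10) : Prop :=
  [/\ x != 0, onG x, inV8 h1 h2 x & qf Q x = 0].

(* X (a threefold) is smooth at x: Jacobian of rank 6 = codim of X in P^9 *)
Definition X_smooth_at (h1 h2 : 'cV[C]_10) (Q : 'M[C]_10) (x : 'rV[C]_10)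
  : Prop := \rank (jacX h1 h2 Q x) = 6%N.

(* t is an ordinary double point of X = G_4 \cap Omega, G_4 smooth:
   X is singular at t with Zariski tangent space T_t G_4 (Jacobian rank 5),
   and the local equation of X in the smooth fourfold G_4 has a
   nondegenerate Hessian at t.  The Hessian is the one of the Lagrangian
   Q - sum_m lam_m P_m (with dQ_t = sum lam_m dP_m + mu1 h1 + mu2 h2),
   restricted to the (5-dim, containing t) tangent space T of the affine
   cone, whose rows-span is kermx (jacG4 t); t lies in its radical, so
   nondegeneracy on T/<t> (dimension 4) means rank 4. *)
Definition ordinary_double_point (h1 h2 : 'cV[C]_10) (Q : 'M[C]_10)
  (t : 'rV[C]_10) : Prop :=
  [/\ onX h1 h2 Q t, \rank (jacX h1 h2 Q t) = 5%N &
   exists (lam : 'I_5 -> C) (mu1 mu2 : C),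
     dqf Q t = \sum_m lam m *: dqf (plucker m) t + mu1 *: h1 + mu2 *: h2 /\
     let S := (Q + Q^T) - \sum_m lam m *: (plucker m + (plucker m)^T) in
     let K := kermx (jacG4 h1 h2 t) in
     \rank (K *m S *m K^T) = 4%N].

Definition quadric_in_V8 (h1 h2 : 'cV[C]_10) (Q : 'M[C]_10) : Prop :=
  exists x, inV8 h1 h2 x /\ qf Q x != 0.

Definition cone_with_vertex (h1 h2 : 'cV[C]_10) (Q' : 'M[C]_10)
  (t : 'rV[C]_10) : Prop :=
  [/\ t != 0, inV8 h1 h2 t &
   forall v, inV8 h1 h2 v -> (v *m (Q' + Q'^T) *m t^T) 0 0 = 0].

End Plucker.

(* Main.v *)
Require Import Defs.
From HB Require Import structures.
From mathcomp Require Import all_boot all_order all_algebra.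
From mathcomp Require Import ring.
From mathcomp Require Import complex reals.
Import Order.TTheory GRing.Theory Num.Theory.
Set Implicit Arguments.
Unset Strict Implicit.
Local Open Scope ring_scope.

Definition bf (C : fieldType) (M : 'M[C]_10) (x y : 'rV[C]_10) : C := (x *m M *m y^T) 0 0.

Lemma bfB (C : fieldType) (A B : 'M[C]_10) x y : bf (A - B) x y = bf A x y - bf B x y.
Proof. by rewrite /bf mulmxBr mulmxBl !mxE. Qed.

Lemma bfD (C : fieldType) (A B : 'M[C]_10) x y : bf (A + B) x y = bf A x y + bf B x y.
Proof. by rewrite /bf mulmxDr mulmxDl !mxE. Qed.

Lemma bf_sum (C : fieldType) (l : 'I_5 -> C) (P : 'I_5 -> 'M[C]_10) x y :
  bf (\sum_m l m *: P m) x y = \sum_m l m * bf (P m) x y.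
Proof.
rewrite /bf mulmx_sumr mulmx_suml summxE; apply: eq_bigr => m _.
by rewrite -scalemxAr -scalemxAl mxE.
Qed.

Lemma bfT (C : fieldType) (A : 'M[C]_10) x y : bf A^T x y = bf A y x.
Proof.
have E : (y *m A *m x^T)^T = x *m A^T *m y^T by rewrite !trmx_mul trmxK mulmxA.
by rewrite /bf -E [in LHS]mxE.
Qed.

Lemma addE00 (C : fieldType) (a b : 'M[C]_1) : (a + b) 0 0 = a 0 0 + b 0 0.
Proof. by rewrite mxE. Qed.

Lemma scaleE00 (C : fieldType) (c : C) (a : 'M[C]_1) : (c *: a) 0 0 = c * a 0 0.
Proof. by rewrite mxE. Qed.

Lemma polar (C : fieldType) (A : 'M[C]_10) x y :
  bf (A + A^T) x y = qf A (x + y) - qf A x - qf A y.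
Proof.
rewrite bfD bfT /qf -!/(bf _ _ _) /bf.
rewrite linearD /= !mulmxDl !mulmxDr !addE00; ring.
Qed.

Lemma ker_h (C : fieldType) (h1 h2 : 'cV[C]_10) (t : 'rV[C]_10) :
  kermx (jacG4 h1 h2 t) *m h1 = 0 /\ kermx (jacG4 h1 h2 t) *m h2 = 0.
Proof.
have E := mulmx_ker (jacG4 h1 h2 t).
have : kermx (jacG4 h1 h2 t) *m (row_mx (\matrix_(a < 10, m < 5) dqf (plucker _ m) t a 0) (row_mx h1 h2) : 'M_(10, 5 + (1 + 1))) = 0 := E.
rewrite !mul_mx_row.
rewrite -(row_mx0 _ _ 5 (1 + 1)) -(row_mx0 _ _ 1 1).
by case/eq_row_mx => _ /eq_row_mx.
Qed.

Lemma lfD (C : fieldType) (h : 'cV[C]_10) x y : lf h (x + y) = lf h x + lf h y.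
Proof. by rewrite /lf mulmxDl addE00. Qed.

Local Open Scope complex_scope.

Theorem lemma5p7 (R : realType) (h1 h2 : 'cV[R[i]]_10) (Q : 'M[R[i]]_10)
  (t : 'rV[R[i]]_10) :
  \rank (row_mx h1 h2) = 2%N ->
  G4_smooth h1 h2 ->
  quadric_in_V8 h1 h2 Q ->
  ordinary_double_point h1 h2 Q t ->
  (forall x : 'rV[R[i]]_10, onX h1 h2 Q x ->
     (forall c : R[i], x != c *: t) -> X_smooth_at h1 h2 Q x) ->
  exists Q' : 'M[R[i]]_10,
    [/\ quadric_in_V8 h1 h2 Q', cone_with_vertex h1 h2 Q' t &
     forall x : 'rV[R[i]]_10, onX h1 h2 Q x <-> onX h1 h2 Q' x].
Proof.
move=> _ _ _ [[tnz tG tV8 tQ] _ [lam [mu1 [mu2 [hd hrk]]]]] _.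
have {hrk} hrk : \rank (kermx (jacG4 h1 h2 t) *m ((Q+Q^T) - \sum_m lam m *: (plucker _ m + (plucker _ m)^T)) *m (kermx (jacG4 h1 h2 t))^T) = 4%N := hrk.
set Sg := \sum_m lam m *: plucker _ m.
set S := _ - _ in hrk.
set K := kermx _ in hrk.
have qfE x : onG x -> qf (Q - Sg) x = qf Q x.
  move=> xG; rewrite [LHS]/qf -/(bf _ x x) bfB bf_sum big1 ?subr0 //.
  by move=> m _; rewrite /bf -/(qf _ x) xG mulr0.
have ST : (Q - Sg) + (Q - Sg)^T = S.
  have T : Sg^T = \sum_m lam m *: (plucker _ m)^T.
    apply/matrixP => i j; rewrite /Sg !mxE !summxE; apply: eq_bigr => m _; rewrite !mxE //.
  rewrite /S.
  under [X in _ = _ - X]eq_bigr do rewrite scalerDr.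
  by rewrite big_split /= -/Sg -T linearB /= opprD addrACA.
have St : S *m t^T = mu1 *: h1 + mu2 *: h2.
  have -> : S *m t^T = dqf Q t - \sum_m lam m *: dqf (plucker _ m) t.
    rewrite /S mulmxBl mulmx_suml; congr (_ - _); apply: eq_bigr => m _.
    by rewrite -scalemxAl.
  by rewrite hd addrAC [X in X + _]addrAC subrr add0r.
exists (Q - Sg); split.
- have [Kh1 Kh2] := ker_h h1 h2 t.
  have KV i : inV8 h1 h2 (row i K).
    by rewrite /inV8 /lf -!row_mul Kh1 Kh2 !mxE.
  case: (boolP [exists i, exists j, (K *m S *m K^T) i j != 0]).
    case/existsP=> i /existsP [j nz].
    have E : (K *m S *m K^T) i j = bf S (row i K) (row j K).
      rewrite /bf -row_mul tr_row !mxE; apply: eq_bigr => k _; rewrite !mxE //.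
    move: nz; rewrite E -ST polar.
    have [Ki Kj] := (KV i, KV j).
    have Vij : inV8 h1 h2 (row i K + row j K).
      by case: Ki Kj => [a b] [c d]; split; rewrite lfD ?a ?b ?c ?d addr0.
    case: (eqVneq (qf (Q - Sg) (row i K + row j K)) 0) => [->|n1]; last by exists (row i K + row j K).
    case: (eqVneq (qf (Q - Sg) (row i K)) 0) => [->|n2]; last by exists (row i K).
    case: (eqVneq (qf (Q - Sg) (row j K)) 0) => [->|n3]; last by exists (row j K).
    by rewrite !subr0 eqxx.
  rewrite negb_exists => /forallP H.
  have : K *m S *m K^T = 0.
    apply/matrixP => i j; rewrite [RHS]mxE.
    by move: (H i); rewrite negb_exists => /forallP/(_ j); rewrite negbK => /eqP.
  by move=> E; move: hrk; rewrite E mxrank0.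
- split => // v [v1 v2].
  rewrite /lf in v1 v2.
  by rewrite ST -mulmxA St mulmxDr -!scalemxAr addE00 !scaleE00 v1 v2 !mulr0 addr0.
- move=> x; split; case=> xnz xG xV xq; split => //.
    by rewrite qfE.
  by rewrite -qfE.
Qed.
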